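(* For every ordinal $\alpha$: if $(T^*_\alpha,P^*_\alpha)$ is consistent (i.e. $T^{*+}_\alpha\cap T^{*-}_\alpha=\emptyset$ and $P^{*+}_\alpha\cap P^{*-}_\alpha=\emptyset$), then it is sound$^*$, i.e. for every $\mathcal L$-sentence $\varphi$, if either $\#\varphi\in P_0^{*-}$ or $(\mathbb N,T^*_\alpha,P^*_\alpha)\models_{SK}\varphi\vee\neg\varphi$, then $(\mathbb N,T^*_\alpha,P^*_\alpha)\not\models_{SK}\mathscr P(\varphi)$.
   Context: Language. Let $\mathcal L_{\mathbb N}$ be the language of first-order Peano arithmetic and $\mathcal L=\mathcal L_{\mathbb N}\cup\{\mathrm T,\mathrm P\}$ with unary predicates $\mathrm T,\mathrm P$. $\mathcal L$-formulas are in Tait style: literals are $s=t$, $s\neq t$, $\mathrm Tt$, $\neg\mathrm Tt$, $\mathrm Pt$, $\neg\mathrm Pt$; formulas are built from literals by $\wedge,\vee,\forall,\exists$; negation of an arbitrary formula is defined by De Morgan dualities with $\neg\neg\varphi:=\varphi$. A standard Gödel numbering is fixed; $\#e$ is the code of $e$, $\ulcorner e\urcorner$ the numeral of $\#e$, $\mathrm{val}(t)$ the value of a closed term $t$, $\dot\neg$ the primitive recursive function with $\dot\neg(\#\varphi)=\#\neg\varphi$; $\mathrm T\varphi,\mathrm P\varphi$ abbreviate $\mathrm T\ulcorner\varphi\urcorner,\mathrm P\ulcorner\varphi\urcorner$. Semantics. A partial model is $(\mathbb N,T,P)$ with $\mathbb N$ the standard model and $T=(T^+,T^-)$, $P=(P^+,P^-)$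 pairs of subsets of $\omega$. Strong Kleene satisfaction $\models_{SK}$: arithmetic literals evaluated in $\mathbb N$; $\mathrm Tt$ satisfied iff $\mathrm{val}(t)\in T^+$, $\neg\mathrm Tt$ iff $\mathrm{val}(t)\in T^-$, likewise for $\mathrm P$ with $P^\pm$; conjunction iff both, disjunction iff at least one, $\forall x\varphi(x)$ iff all numeral instances, $\exists x\varphi(x)$ iff some numeral instance. Base paradoxicality. $\mathrm{PA}[\mathrm{SK}]$ is the two-sided sequent calculus for Strong Kleene logic with identity in $\mathcal L$ (initial sequents $\varphi\Rightarrow\varphi$, cut, weakening, the rule from $\Gamma\Rightarrow\Delta,\varphi$ infer $\neg\varphi,\Gamma\Rightarrow\Delta$, usual rules for $\wedge,\vee,\forall,\exists$, reflexivity $\Rightarrow t=t$, replacement from $\Gamma\Rightarrow\Delta,\varphi(t)$ infer $\Gamma\Rightarrow\Delta,s\neq t,\varphi(s)$) plus the initial sequents of Peano arithmetic and the induction rule for all $\mathcal L$-formulas. A sentence $\varphi$ is base paradoxical iff $\mathrm{PA}[\mathrm{SK}]$ derives $\varphi\Leftrightarrow\neg\mathrm T\varphi$ and $\neg\varphi\Leftrightarrow\mathrm T\varphi$ ($\Leftrightarrow$ meaning both sequents). $B(x)$ is an $\mathcal L_{\mathbb N}$-formula defining in $\mathbb N$ the set of codes of base paradoxical sentences, and $\Pi(x):=B(x)\vee B(\dot\neg x)$. Paradoxicality clauses. Let $\mathscr P(x)$ be the $\mathcal L$-formula which is the disjunction of: (1) $x$ codes a sentence and $\Pi(x)$; (2)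 $x$ codes a sentence $\mathrm Tt$ ($t$ a closed term) and $\mathrm P(\mathrm{val}(t))$; (3) $x$ codes a sentence $\neg\mathrm Tt$ and $\mathrm P(\mathrm{val}(t))$; (4) $x$ codes a sentence $\psi\wedge\theta$ and $(\mathrm P\psi\wedge\mathrm P\theta)\vee(\mathrm T\psi\wedge\mathrm P\theta)\vee(\mathrm T\theta\wedge\mathrm P\psi)$; (5) $x$ codes a sentence $\psi\vee\theta$ and $(\mathrm P\psi\wedge\mathrm P\theta)\vee(\neg\mathrm T\psi\wedge\mathrm P\theta)\vee(\neg\mathrm T\theta\wedge\mathrm P\psi)$; (6) $x$ codes a sentence $\forall v\psi$ and $\exists y\,\mathrm P\psi(\dot y)\wedge\forall y(\mathrm P\psi(\dot y)\vee\mathrm T\psi(\dot y))$; (7) $x$ codes a sentence $\exists v\psi$ and $\exists y\,\mathrm P\psi(\dot y)\wedge\forall y(\mathrm P\psi(\dot y)\vee\neg\mathrm T\psi(\dot y))$; here $\psi(\dot y)$ is the code of the result of substituting the numeral of $y$ for $v$. Write $\mathscr P(\varphi)$ for $\mathscr P(\ulcorner\varphi\urcorner)$. Modified sequence. Let $P_0^{*-}$ be the set of codes of the sentences $\mathrm P\ulcorner\varphi\urcorner$ for $\varphi$ an $\mathcal L$-formula. Define $\Gamma^*_{\mathscr{TP}}(T,P)=\big((\{\#\varphi:(\mathbb N,T,P)\models_{SK}\varphi\},\{\#\varphi:(\mathbb N,T,P)\models_{SK}\neg\varphi\}),(\{\#\varphi:(\mathbb N,T,P)\models_{SK}\mathscr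 P(\varphi)\},\{\#\varphi:(\mathbb N,T,P)\models_{SK}\varphi\vee\neg\varphi\}\cup P_0^{*-})\big)$, $\varphi$ ranging over $\mathcal L$-sentences. Define $(T^*_0,P^*_0)=((\emptyset,\emptyset),(\emptyset,P_0^{*-}))$, $(T^*_{\xi+1},P^*_{\xi+1})=\Gamma^*_{\mathscr{TP}}(T^*_\xi,P^*_\xi)$, and $(T^*_\lambda,P^*_\lambda)=\bigcup_{\xi<\lambda}(T^*_\xi,P^*_\xi)$ (componentwise union) for limit $\lambda$. *)

(* Defs.v *)
From Stdlib Require Import List Arith.
Import ListNotations.

Inductive term : Type :=
| Var (n : nat) | Zero | Succ (t : term) | Plus (s t : term) | Times (s t : term).

Inductive formula : Type :=
| Eq (s t : term) | Neq (s t : term)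
| Tr (t : term) | NTr (t : term)
| Pa (t : term) | NPa (t : term)
| And (A B : formula) | Or (A B : formula)
| All (v : nat) (A : formula) | Ex (v : nat) (A : formula).

Fixpoint neg (A : formula) : formula :=
  match A with
  | Eq s t => Neq s t | Neq s t => Eq s t
  | Tr t => NTr t | NTr t => Tr t
  | Pa t => NPa t | NPa t => Pa t
  | And A B => Or (neg A) (neg B) | Or A B => And (neg A) (neg B)
  | All v A => Ex v (neg A) | Ex v A => All v (neg A)
  end.

Fixpoint fvt (t : term) : list nat :=
  match t with
  | Var n => [n] | Zero => []
  | Succ t => fvt t
  | Plus s t | Times s t => fvt s ++ fvt t
  end.

Fixpoint fv (A : formula) : list nat :=
  match A with
  | Eq s t | Neq s t => fvt s ++ fvt t
  | Tr t | NTr t | Pa t | NPa t => fvt t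
  | And A B | Or A B => fv A ++ fv B
  | All v A | Ex v A => remove Nat.eq_dec v (fv A)
  end.

Definition fvl (G : list formula) : list nat := flat_map fv G.

Definition closed_term (t : term) : Prop := fvt t = [].
Definition sentence (A : formula) : Prop := fv A = [].

Fixpoint subst_t (v : nat) (u t : term) : term :=
  match t with
  | Var n => if Nat.eqb n v then u else Var n
  | Zero => Zero
  | Succ t => Succ (subst_t v u t)
  | Plus s t => Plus (subst_t v u s) (subst_t v u t)
  | Times s t => Times (subst_t v u s) (subst_t v u t)
  end.

Fixpoint subst (v : nat) (u : term) (A : formula) : formula :=
  match A with
  | Eq s t => Eq (subst_t v u s) (subst_t v u t)
  | Neq s t => Neq (subst_t v u s) (subst_t v u t)
  | Tr t => Tr (subst_t v u t) | NTr t => NTr (subst_t v u t)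
  | Pa t => Pa (subst_t v u t) | NPa t => NPa (subst_t v u t)
  | And A B => And (subst v u A) (subst v u B)
  | Or A B => Or (subst v u A) (subst v u B)
  | All w A => if Nat.eqb w v then All w A else All w (subst v u A)
  | Ex w A => if Nat.eqb w v then Ex w A else Ex w (subst v u A)
  end.

Fixpoint free_for (u : term) (v : nat) (A : formula) : Prop :=
  match A with
  | And A B | Or A B => free_for u v A /\ free_for u v B
  | All w A' | Ex w A' =>
      ~ In v (fv A) \/ (~ In w (fvt u) /\ free_for u v A')
  | _ => True
  end.

Fixpoint num (n : nat) : term :=
  match n with 0 => Zero | S k => Succ (num k) end.

Fixpoint valt (t : term) : nat :=
  match t with
  | Var _ => 0 | Zero => 0
  | Succ t => S (valt t)
  | Plus s t => valt s + valt t
  | Times s t => valt s * valt t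
  end.

Definition pair (a b : nat) : nat := (a + b) * (a + b + 1) / 2 + b.

Fixpoint code_t (t : term) : nat :=
  match t with
  | Var n => pair 0 n
  | Zero => pair 1 0
  | Succ t => pair 2 (code_t t)
  | Plus s t => pair 3 (pair (code_t s) (code_t t))
  | Times s t => pair 4 (pair (code_t s) (code_t t))
  end.

Fixpoint code (A : formula) : nat :=
  match A with
  | Eq s t => pair 0 (pair (code_t s) (code_t t))
  | Neq s t => pair 1 (pair (code_t s) (code_t t))
  | Tr t => pair 2 (code_t t)
  | NTr t => pair 3 (code_t t)
  | Pa t => pair 4 (code_t t)
  | NPa t => pair 5 (code_t t)
  | And A B => pair 6 (pair (code A) (code B))
  | Or A B => pair 7 (pair (code A) (code B))
  | All v A => pair 8 (pair v (code A))
  | Ex v A => pair 9 (pair v (code A))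
  end.

Definition quote (A : formula) : term := num (code A).

Record model : Type := Model {
  Tp : nat -> Prop; Tm : nat -> Prop;
  Pp : nat -> Prop; Pm : nat -> Prop
}.

Inductive sat (M : model) : formula -> Prop :=
| sat_eq s t : valt s = valt t -> sat M (Eq s t)
| sat_neq s t : valt s <> valt t -> sat M (Neq s t)
| sat_tr t : Tp M (valt t) -> sat M (Tr t)
| sat_ntr t : Tm M (valt t) -> sat M (NTr t)
| sat_pa t : Pp M (valt t) -> sat M (Pa t)
| sat_npa t : Pm M (valt t) -> sat M (NPa t)
| sat_and A B : sat M A -> sat M B -> sat M (And A B)
| sat_orl A B : sat M A -> sat M (Or A B)
| sat_orr A B : sat M B -> sat M (Or A B)
| sat_all v A : (forall n, sat M (subst v (num n) A)) -> sat M (All v A)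
| sat_ex v A n : sat M (subst v (num n) A) -> sat M (Ex v A).

(* Sequents are lists read as sets (weakening/exchange/contraction are
   covered by the weakening rule stated with list inclusion). *)
Inductive prv : list formula -> list formula -> Prop :=
| r_init A : prv [A] [A]
| r_cut G D A : prv G (A :: D) -> prv (A :: G) D -> prv G D
| r_weak G D G' D' : prv G D -> incl G G' -> incl D D' -> prv G' D'
| r_negL G D A : prv G (A :: D) -> prv (neg A :: G) D
| r_andL1 G D A B : prv (A :: G) D -> prv (And A B :: G) D
| r_andL2 G D A B : prv (B :: G) D -> prv (And A B :: G) D
| r_andR G D A B : prv G (A :: D) -> prv G (B :: D) -> prv G (And A B :: D)
| r_orL G D A B : prv (A :: G) D -> prv (B :: G) D -> prv (Or A B :: G) D
| r_orR1 G D A B : prv G (A :: D) -> prv G (Or A B :: D)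
| r_orR2 G D A B : prv G (B :: D) -> prv G (Or A B :: D)
| r_allL G D v A t : free_for t v A ->
    prv (subst v t A :: G) D -> prv (All v A :: G) D
| r_allR G D v A y : free_for (Var y) v A ->
    ~ In y (fvl G) -> ~ In y (fvl D) -> ~ In y (fv (All v A)) ->
    prv G (subst v (Var y) A :: D) -> prv G (All v A :: D)
| r_exL G D v A y : free_for (Var y) v A ->
    ~ In y (fvl G) -> ~ In y (fvl D) -> ~ In y (fv (Ex v A)) ->
    prv (subst v (Var y) A :: G) D -> prv (Ex v A :: G) D
| r_exR G D v A t : free_for t v A ->
    prv G (subst v t A :: D) -> prv G (Ex v A :: D)
| r_refl t : prv [] [Eq t t]
| r_repl G D v A s t : free_for s v A -> free_for t v A ->
    prv G (subst v t A :: D) -> prv G (Neq s t :: subst v s A :: D)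
| ax_succ0 t : prv [] [Neq (Succ t) Zero]
| ax_succinj s t : prv [] [Neq (Succ s) (Succ t); Eq s t]
| ax_plus0 s : prv [] [Eq (Plus s Zero) s]
| ax_plusS s t : prv [] [Eq (Plus s (Succ t)) (Succ (Plus s t))]
| ax_times0 s : prv [] [Eq (Times s Zero) Zero]
| ax_timesS s t : prv [] [Eq (Times s (Succ t)) (Plus (Times s t) s)]
| r_ind G D v A y t :
    free_for (Var y) v A -> free_for (Succ (Var y)) v A -> free_for t v A ->
    ~ In y (fvl G) -> ~ In y (fvl D) -> ~ In y (fv (All v A)) ->
    prv (subst v (Var y) A :: G) (subst v (Succ (Var y)) A :: D) ->
    prv (subst v Zero A :: G) (subst v t A :: D).

Definition biprv (A B : formula) : Prop := prv [A] [B] /\ prv [B] [A].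

Definition base_paradoxical (A : formula) : Prop :=
  sentence A /\ biprv A (neg (Tr (quote A))) /\ biprv (neg A) (Tr (quote A)).

Definition Bset (n : nat) : Prop :=
  exists A, base_paradoxical A /\ code A = n.

(* Unfolding of (N,T,P) |=_SK P(n-bar), clause by clause; the arithmetical
   parts (coding facts, B) are evaluated in the standard model.
   For x = #phi, (dot-neg x) = #(neg phi). *)
Definition Psat (M : model) (n : nat) : Prop :=
  (exists A, sentence A /\ code A = n /\ (Bset (code A) \/ Bset (code (neg A))))
  \/ (exists t, closed_term t /\ code (Tr t) = n /\ Pp M (valt t))
  \/ (exists t, closed_term t /\ code (NTr t) = n /\ Pp M (valt t))
  \/ (exists A B, sentence (And A B) /\ code (And A B) = n /\
        ((Pp M (code A) /\ Pp M (code B)) \/ (Tp M (code A) /\ Pp M (code B))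
         \/ (Tp M (code B) /\ Pp M (code A))))
  \/ (exists A B, sentence (Or A B) /\ code (Or A B) = n /\
        ((Pp M (code A) /\ Pp M (code B)) \/ (Tm M (code A) /\ Pp M (code B))
         \/ (Tm M (code B) /\ Pp M (code A))))
  \/ (exists v A, sentence (All v A) /\ code (All v A) = n /\
        (exists y, Pp M (code (subst v (num y) A))) /\
        (forall y, Pp M (code (subst v (num y) A)) \/ Tp M (code (subst v (num y) A))))
  \/ (exists v A, sentence (Ex v A) /\ code (Ex v A) = n /\
        (exists y, Pp M (code (subst v (num y) A))) /\
        (forall y, Pp M (code (subst v (num y) A)) \/ Tm M (code (subst v (num y) A)))).

Definition P0m (n : nat) : Prop := exists A, n = code (Pa (quote A)).

Definition GammaTP (M : model) : model := {|
  Tp := fun n => exists A, sentence A /\ code A = n /\ sat M A;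
  Tm := fun n => exists A, sentence A /\ code A = n /\ sat M (neg A);
  Pp := fun n => exists A, sentence A /\ code A = n /\ Psat M (code A);
  Pm := fun n => (exists A, sentence A /\ code A = n /\ sat M (Or A (neg A))) \/ P0m n
|}.

Definition stage0 : model := {|
  Tp := fun _ => False; Tm := fun _ => False; Pp := fun _ => False; Pm := P0m |}.

Definition union_below {I : Type} (lt : I -> I -> Prop) (S : I -> model) (i : I)
  : model := {|
  Tp := fun n => exists j, lt j i /\ Tp (S j) n;
  Tm := fun n => exists j, lt j i /\ Tm (S j) n;
  Pp := fun n => exists j, lt j i /\ Pp (S j) n;
  Pm := fun n => exists j, lt j i /\ Pm (S j) n |}.

Definition meq (M N : model) : Prop :=
  (forall n, Tp M n <-> Tp N n) /\ (forall n, Tm M n <-> Tm N n) /\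
  (forall n, Pp M n <-> Pp N n) /\ (forall n, Pm M n <-> Pm N n).

(* A well-order (I, lt): elements of I stand for ordinals (the order type
   of their predecessors). *)
Definition well_order {I : Type} (lt : I -> I -> Prop) : Prop :=
  well_founded lt /\ (forall a b c, lt a b -> lt b c -> lt a c) /\
  (forall a b, lt a b \/ a = b \/ lt b a).

Definition star_sequence {I : Type} (lt : I -> I -> Prop) (S : I -> model) : Prop :=
  forall i,
    ((forall j, ~ lt j i) -> meq (S i) stage0) /\
    (forall j, lt j i -> (forall k, ~ (lt j k /\ lt k i)) -> meq (S i) (GammaTP (S j))) /\
    ((exists j, lt j i) -> (forall j, lt j i -> exists k, lt j k /\ lt k i) ->
       meq (S i) (union_below lt S i)).

Definition consistent (M : model) : Prop :=
  (forall n, ~ (Tp M n /\ Tm M n)) /\ (forall n, ~ (Pp M n /\ Pm M n)).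

Definition sound_star (M : model) : Prop :=
  forall A, sentence A -> (P0m (code A) \/ sat M (Or A (neg A))) -> ~ Psat M (code A).

(* Main.v *)
Require Import Defs.
From Stdlib Require Import List Arith Lia Classical FunctionalExtensionality.
Import ListNotations.

Definition tri (s : nat) := s * (s + 1) / 2.
Lemma tri_S s : tri (s + 1) = tri s + s + 1.
Proof.
  unfold tri. replace ((s + 1) * (s + 1 + 1)) with (s * (s + 1) + (s + 1) * 2) by ring.
  rewrite Nat.div_add by lia. lia.
Qed.
Lemma tri_lt s k : tri s + s < tri (s + k + 1).
Proof.
  induction k. rewrite Nat.add_0_r, tri_S. lia.
  replace (s + S k + 1) with ((s + k + 1) + 1) by lia. rewrite tri_S. lia.
Qed.
Lemma pair_eq a b : pair a b = tri (a + b) + b.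
Proof. reflexivity. Qed.
Lemma pair_inj a b c d : pair a b = pair c d -> a = c /\ b = d.
Proof.
  rewrite !pair_eq. intros H.
  destruct (lt_eq_lt_dec (a + b) (c + d)) as [[Hl|He]|Hl].
  - exfalso. pose proof (tri_lt (a+b) (c + d - (a+b) - 1)).
    replace (a + b + (c + d - (a + b) - 1) + 1) with (c+d) in H0 by lia. lia.
  - rewrite He in H. lia.
  - exfalso. pose proof (tri_lt (c+d) (a + b - (c+d) - 1)).
    replace (c + d + (a + b - (c + d) - 1) + 1) with (a+b) in H0 by lia. lia.
Qed.

Lemma code_t_inj : forall s t, code_t s = code_t t -> s = t.
Proof.
  induction s; destruct t; simpl; intros H; apply pair_inj in H; destruct H as [H1 H2];
    try discriminate; auto.
  - f_equal; exact (IHs _ H2).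
  - apply pair_inj in H2; destruct H2. f_equal; auto.
  - apply pair_inj in H2; destruct H2. f_equal; auto.
Qed.

Lemma code_inj : forall A B, code A = code B -> A = B.
Proof.
  induction A; destruct B; simpl; intros H; apply pair_inj in H; destruct H as [H1 H2];
    try discriminate;
    try (apply pair_inj in H2; destruct H2);
    try (f_equal; auto using code_t_inj).
Qed.

Definition upd (e : nat -> nat) (v n : nat) : nat -> nat :=
  fun x => if Nat.eqb x v then n else e x.

Fixpoint evalt (e : nat -> nat) (t : term) : nat :=
  match t with
  | Var n => e n | Zero => 0 | Succ t => S (evalt e t)
  | Plus s t => evalt e s + evalt e t
  | Times s t => evalt e s * evalt e t
  end.

Fixpoint satv (M : model) (e : nat -> nat) (A : formula) : Prop :=
  match A with
  | Eq s t => evalt e s = evalt e t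
  | Neq s t => evalt e s <> evalt e t
  | Tr t => Tp M (evalt e t) | NTr t => Tm M (evalt e t)
  | Pa t => Pp M (evalt e t) | NPa t => Pm M (evalt e t)
  | And A B => satv M e A /\ satv M e B
  | Or A B => satv M e A \/ satv M e B
  | All v A => forall n, satv M (upd e v n) A
  | Ex v A => exists n, satv M (upd e v n) A
  end.

Lemma evalt_subst e v u t : evalt e (subst_t v u t) = evalt (upd e v (evalt e u)) t.
Proof.
  induction t; simpl; auto.
  unfold upd; destruct (Nat.eqb n v); reflexivity.
Qed.

Lemma evalt_ext e e' t : (forall x, In x (fvt t) -> e x = e' x) -> evalt e t = evalt e' t.
Proof.
  induction t; simpl; intros H; auto.
  all: rewrite IHt1, IHt2 by (intros; apply H; apply in_or_app; auto); auto.
Qed.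

Lemma satv_ext M : forall A e e', (forall x, In x (fv A) -> e x = e' x) ->
  (satv M e A <-> satv M e' A).
Proof.
  induction A; simpl; intros e e' H;
   try (rewrite !(evalt_ext e e' t) by (intros; apply H; auto using in_or_app); tauto);
   try (rewrite !(evalt_ext e e' s), !(evalt_ext e e' t) by (intros; apply H; auto using in_or_app); tauto).
  - rewrite (IHA1 e e'), (IHA2 e e') by (intros; apply H; auto using in_or_app); tauto.
  - rewrite (IHA1 e e'), (IHA2 e e') by (intros; apply H; auto using in_or_app); tauto.
  - assert (Hx : forall n, satv M (upd e v n) A <-> satv M (upd e' v n) A).
    { intros n; apply IHA. intros x Hx. unfold upd. destruct (Nat.eqb_spec x v); auto.
      apply H. apply in_in_remove; auto. }
    split; intros H1 n; apply Hx; auto.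
  - assert (Hx : forall n, satv M (upd e v n) A <-> satv M (upd e' v n) A).
    { intros n; apply IHA. intros x Hx. unfold upd. destruct (Nat.eqb_spec x v); auto.
      apply H. apply in_in_remove; auto. }
    split; intros [n H1]; exists n; apply Hx; auto.
Qed.

Lemma subst_t_notfree v u t : ~ In v (fvt t) -> subst_t v u t = t.
Proof.
  induction t; simpl; intros H; auto.
  - destruct (Nat.eqb_spec n v); subst; auto. exfalso; auto.
  - rewrite IHt; auto.
  - rewrite IHt1, IHt2; auto using in_or_app.
  - rewrite IHt1, IHt2; auto using in_or_app.
Qed.

Lemma subst_notfree v u : forall A, ~ In v (fv A) -> subst v u A = A.
Proof.
  induction A; simpl; intros H;
   try (rewrite !subst_t_notfree; auto using in_or_app; fail).
  - rewrite IHA1, IHA2; auto using in_or_app.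
  - rewrite IHA1, IHA2; auto using in_or_app.
  - destruct (Nat.eqb_spec v0 v); auto. rewrite IHA; auto.
    intros H1; apply H; apply in_in_remove; auto.
  - destruct (Nat.eqb_spec v0 v); auto. rewrite IHA; auto.
    intros H1; apply H; apply in_in_remove; auto.
Qed.

Lemma upd_comm e v w a n x : v <> w -> upd (upd e w n) v a x = upd (upd e v a) w n x.
Proof.
  intros H; unfold upd. destruct (Nat.eqb_spec x v); destruct (Nat.eqb_spec x w); subst; auto.
  congruence.
Qed.

Lemma satv_subst M : forall A e v t, free_for t v A ->
  (satv M e (subst v t A) <-> satv M (upd e v (evalt e t)) A).
Proof.
  induction A; intros e w u Hff; simpl in *;
    try (rewrite !evalt_subst; tauto).
  - destruct Hff. rewrite IHA1, IHA2 by auto; tauto.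
  - destruct Hff. rewrite IHA1, IHA2 by auto; tauto.
  - destruct (Nat.eqb_spec v w) as [Hvw|Hvw].
    + subst. simpl. apply (satv_ext M (All w A)). simpl. intros x Hx.
      apply in_remove in Hx. unfold upd. destruct (Nat.eqb_spec x w); tauto.
    + destruct Hff as [Hnf | [Hw Hff]].
      * rewrite subst_notfree by (intros H1; apply Hnf; apply in_in_remove; auto).
        apply (satv_ext M (All v A)). simpl. intros x Hx. unfold upd.
        destruct (Nat.eqb_spec x w); subst; tauto.
      * simpl. split; intros H n.
        -- specialize (H n). rewrite IHA in H by auto.
           rewrite (evalt_ext (upd e v n) e u) in H.
           2:{ intros x Hx. unfold upd. destruct (Nat.eqb_spec x v); subst; tauto. }
           revert H. apply satv_ext. intros x _. apply upd_comm; auto.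
        -- rewrite IHA by auto.
           rewrite (evalt_ext (upd e v n) e u).
           2:{ intros x Hx. unfold upd. destruct (Nat.eqb_spec x v); subst; tauto. }
           generalize (H n). apply satv_ext. intros x _. symmetry; apply upd_comm; auto.
  - destruct (Nat.eqb_spec v w) as [Hvw|Hvw].
    + subst. simpl. apply (satv_ext M (Ex w A)). simpl. intros x Hx.
      apply in_remove in Hx. unfold upd. destruct (Nat.eqb_spec x w); tauto.
    + destruct Hff as [Hnf | [Hw Hff]].
      * rewrite subst_notfree by (intros H1; apply Hnf; apply in_in_remove; auto).
        apply (satv_ext M (Ex v A)). simpl. intros x Hx. unfold upd.
        destruct (Nat.eqb_spec x w); subst; tauto.
      * simpl. split; intros [n H]; exists n.
        -- rewrite IHA in H by auto.
           rewrite (evalt_ext (upd e v n) e u) in H.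
           2:{ intros x Hx. unfold upd. destruct (Nat.eqb_spec x v); subst; tauto. }
           revert H. apply satv_ext. intros x _. apply upd_comm; auto.
        -- rewrite IHA by auto.
           rewrite (evalt_ext (upd e v n) e u).
           2:{ intros x Hx. unfold upd. destruct (Nat.eqb_spec x v); subst; tauto. }
           revert H. apply satv_ext. intros x _. symmetry; apply upd_comm; auto.
Qed.

Lemma satv_neg_cons M : consistent M -> forall A e, satv M e A -> satv M e (neg A) -> False.
Proof.
  intros [HT HP]. induction A; simpl; intros e H1 H2;
    try solve [eauto | exact (HT _ (conj H1 H2)) | exact (HT _ (conj H2 H1))
              | exact (HP _ (conj H1 H2)) | exact (HP _ (conj H2 H1))].
  - destruct H1 as [H1 H1']; destruct H2; eauto.
  - destruct H2 as [H2 H2']; destruct H1; eauto.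
  - destruct H2 as [n H2]; eauto.
  - destruct H1 as [n H1]; eauto.
Qed.
Fixpoint fsize (A : formula) : nat :=
  match A with
  | And A B | Or A B => S (fsize A + fsize B)
  | All _ A | Ex _ A => S (fsize A)
  | _ => 1
  end.

Lemma fsize_subst v u : forall A, fsize (subst v u A) = fsize A.
Proof.
  induction A; simpl; auto.
  all: try (destruct (Nat.eqb v0 v); simpl; auto).
Qed.

Lemma fvt_num n : fvt (num n) = [].
Proof. induction n; simpl; auto. Qed.
Lemma evalt_num e n : evalt e (num n) = n.
Proof. induction n; simpl; auto. Qed.

Lemma free_for_closed u v : fvt u = [] -> forall A, free_for u v A.
Proof.
  intros Hu; induction A; simpl; auto.
  all: right; split; auto; rewrite Hu; simpl; auto.
Qed.

Definition e0 : nat -> nat := fun _ => 0.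
Lemma evalt_e0 t : evalt e0 t = valt t.
Proof. induction t; simpl; auto. Qed.

Lemma satv_sat M : forall k A, fsize A <= k -> (satv M e0 A <-> sat M A).
Proof.
  induction k; intros A Hk; [destruct A; simpl in Hk; lia|].
  destruct A; simpl in Hk |- *; rewrite ?evalt_e0.
  all: try (split; intros H; [constructor; auto | inversion H; subst; auto]; fail).
  - rewrite (IHk A1), (IHk A2) by lia. split; [intros []; constructor; auto|].
    intros H; inversion H; subst; auto.
  - rewrite (IHk A1), (IHk A2) by lia. split; [intros []; [apply sat_orl|apply sat_orr]; auto|].
    intros H; inversion H; subst; auto.
  - assert (Hn : forall n, satv M (upd e0 v n) A <-> sat M (subst v (num n) A)).
    { intros n. rewrite <- IHk by (rewrite fsize_subst; lia).
      rewrite satv_subst by (apply free_for_closed, fvt_num). rewrite evalt_num. tauto. }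
    split; intros H. constructor; intros n; apply Hn; auto.
    inversion H; subst. intros n; apply Hn; auto.
  - assert (Hn : forall n, satv M (upd e0 v n) A <-> sat M (subst v (num n) A)).
    { intros n. rewrite <- IHk by (rewrite fsize_subst; lia).
      rewrite satv_subst by (apply free_for_closed, fvt_num). rewrite evalt_num. tauto. }
    split; intros H. destruct H as [n H]. apply sat_ex with n; apply Hn; auto.
    inversion H; subst. exists n; apply Hn; auto.
Qed.

Lemma satv_sat' M A : satv M e0 A <-> sat M A.
Proof. apply (satv_sat M (fsize A)); auto. Qed.

Lemma not_in_fvl y G A : ~ In y (fvl G) -> In A G -> ~ In y (fv A).
Proof.
  intros H HA H1; apply H. unfold fvl. apply in_flat_map. eauto.
Qed.

Lemma satv_upd_fresh M y n e A : ~ In y (fv A) -> (satv M (upd e y n) A <-> satv M e A).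
Proof.
  intros H; apply satv_ext. intros x Hx. unfold upd.
  destruct (Nat.eqb_spec x y); subst; tauto.
Qed.

Lemma satv_eig M y v n m e A : ~ In y (remove Nat.eq_dec v (fv A)) ->
  (satv M (upd (upd e y n) v m) A <-> satv M (upd e v m) A).
Proof.
  intros H; apply satv_ext. intros x Hx. unfold upd.
  destruct (Nat.eqb_spec x v); auto.
  destruct (Nat.eqb_spec x y); subst; auto.
  exfalso; apply H; apply in_in_remove; auto.
Qed.

Lemma upd_same e y n : upd e y n y = n.
Proof. unfold upd; rewrite Nat.eqb_refl; auto. Qed.
#[local] Hint Resolve in_eq in_cons : core.
Ltac fresh_tac := match goal with H: ~ In ?y (fvl ?G), HC: In ?C ?G |- ~ In ?y (fv ?C) => exact (not_in_fvl _ _ _ H HC) end.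
Lemma soundness M : consistent M -> forall G D, prv G D ->
  forall e, (forall A, In A G -> satv M e A) -> exists B, In B D /\ satv M e B.
Proof.
  intros HM G D Hp. induction Hp; intros e HG.
  - exists A; split; simpl; auto.
  - destruct (IHHp1 e HG) as [B [[<-|HB] HB']].
    + apply IHHp2. intros C [<-|HC]; auto.
    + eauto.
  - destruct (IHHp e) as [B [HB HB']].
    { intros C HC; apply HG; auto. }
    exists B; auto.
  - destruct (IHHp e) as [B [[<-|HB] HB']].
    + intros C HC; apply HG; simpl; auto.
    + exfalso; apply (satv_neg_cons M HM A e); auto.
    + exists B; split; auto.
  - apply IHHp. intros C [<-|HC]; [apply (HG (And A B)); simpl; auto| apply HG; simpl; auto].
  - apply IHHp. intros C [<-|HC]; [apply (HG (And A B)); simpl; auto| apply HG; simpl; auto].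
  - destruct (IHHp1 e HG) as [C [[<-|HC] HC']]; [|exists C; simpl; auto].
    destruct (IHHp2 e HG) as [C' [[<-|HC2] HC2']]; [|exists C'; simpl; auto].
    exists (And A B); simpl; auto.
  - assert (H := HG (Or A B) (or_introl eq_refl)). simpl in H. destruct H as [H|H].
    + apply IHHp1. intros C [<-|HC]; auto.
    + apply IHHp2. intros C [<-|HC]; auto.
  - destruct (IHHp e HG) as [C [[<-|HC] HC']]; [|exists C; simpl; auto].
    exists (Or A B); simpl; auto.
  - destruct (IHHp e HG) as [C [[<-|HC] HC']]; [|exists C; simpl; auto].
    exists (Or A B); simpl; auto.
  - apply IHHp. intros C [<-|HC]; [|apply HG; simpl; auto].
    assert (Hh := HG (All v A) (or_introl eq_refl)). simpl in Hh.
    apply satv_subst; auto.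
  - destruct (classic (exists B, In B D /\ satv M e B)) as [HD|HD].
    { destruct HD as [B [HB HB']]; exists B; simpl; auto. }
    exists (All v A); split; simpl; auto. intros n.
    destruct (IHHp (upd e y n)) as [B [[<-|HB] HB']].
    + intros C HC. apply satv_upd_fresh; [fresh_tac|]. auto.
    + apply satv_subst in HB'; auto. simpl in HB'. rewrite upd_same in HB'. apply satv_eig in HB'; auto.
    + exfalso; apply HD. exists B; split; auto.
      apply satv_upd_fresh in HB'; auto. fresh_tac.
  - assert (Hh := HG (Ex v A) (or_introl eq_refl)). simpl in Hh. destruct Hh as [n Hn].
    destruct (IHHp (upd e y n)) as [B [HB HB']].
    + intros C [<-|HC].
      * apply satv_subst; auto. simpl. rewrite upd_same. apply satv_eig; auto.
      * apply satv_upd_fresh; [fresh_tac|]. apply HG; simpl; auto.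
    + exists B; split; auto. apply satv_upd_fresh in HB'; auto. fresh_tac.
  - destruct (IHHp e HG) as [C [[<-|HC] HC']]; [|exists C; simpl; auto].
    exists (Ex v A); split; simpl; auto. exists (evalt e t). apply satv_subst; auto.
  - exists (Eq t t); simpl; auto.
  - destruct (IHHp e HG) as [C [[<-|HC] HC']]; [|exists C; simpl; auto].
    destruct (Nat.eq_dec (evalt e s) (evalt e t)) as [Heq|Hne].
    + exists (subst v s A); simpl; split; auto. apply satv_subst; auto.
      rewrite Heq. apply satv_subst; auto.
    + exists (Neq s t); simpl; auto.
  - exists (Neq (Succ t) Zero); simpl; split; auto.
  - destruct (Nat.eq_dec (evalt e s) (evalt e t)).
    + exists (Eq s t); simpl; auto.
    + exists (Neq (Succ s) (Succ t)); simpl; split; auto.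
  - exists (Eq (Plus s Zero) s); simpl; split; auto; lia.
  - exists (Eq (Plus s (Succ t)) (Succ (Plus s t))); simpl; split; auto; lia.
  - exists (Eq (Times s Zero) Zero); simpl; split; auto; lia.
  - exists (Eq (Times s (Succ t)) (Plus (Times s t) s)); simpl; split; auto.
  - destruct (classic (exists B, In B D /\ satv M e B)) as [HD|HD].
    { destruct HD as [B [HB HB']]; exists B; simpl; auto. }
    exists (subst v t A); split; simpl; auto.
    assert (Hall : forall n, satv M (upd e v n) A).
    { induction n.
      - assert (Hz := HG _ (or_introl eq_refl)).
        apply satv_subst in Hz; [|apply free_for_closed; reflexivity]. exact Hz.
      - destruct (IHHp (upd e y n)) as [B [[<-|HB] HB']].
        + intros C [<-|HC].
          * apply satv_subst; auto. simpl. rewrite upd_same. apply satv_eig; auto.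
          * apply satv_upd_fresh; [fresh_tac|]. apply HG; simpl; auto.
        + apply satv_subst in HB'; auto. simpl in HB'. rewrite upd_same in HB'. apply satv_eig in HB'; auto.
        + exfalso; apply HD. exists B; split; auto.
          apply satv_upd_fresh in HB'; auto. fresh_tac. }
    apply satv_subst; auto.
Qed.
Definition sub (M N : model) : Prop :=
  (forall n, Tp M n -> Tp N n) /\ (forall n, Tm M n -> Tm N n) /\
  (forall n, Pp M n -> Pp N n) /\ (forall n, Pm M n -> Pm N n).

Lemma sub_refl M : sub M M.
Proof. unfold sub; tauto. Qed.
Lemma sub_trans M N K : sub M N -> sub N K -> sub M K.
Proof. unfold sub; intuition. Qed.
Lemma meq_sub M N : meq M N -> sub M N /\ sub N M.
Proof. unfold meq, sub; intros [H1 [H2 [H3 H4]]]; repeat split; intros n; 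
  first [apply H1|apply H2|apply H3|apply H4]. Qed.

Lemma sat_mono M N A : sub M N -> sat M A -> sat N A.
Proof.
  intros [H1 [H2 [H3 H4]]] H. induction H; try (econstructor; eauto; fail); apply sat_orr; auto.
Qed.

Lemma Psat_mono M N n : sub M N -> Psat M n -> Psat N n.
Proof.
  intros [H1 [H2 [H3 H4]]]. unfold Psat. intros H.
  destruct H as [H|[H|[H|[H|[H|[H|H]]]]]].
  - left; exact H.
  - right; left. destruct H as [t [Ht [Hc Hp]]]. exists t; auto.
  - right; right; left. destruct H as [t [Ht [Hc Hp]]]. exists t; auto.
  - do 3 right; left. destruct H as [A [B [Hs [Hc Hp]]]]. exists A, B; repeat split; auto.
    destruct Hp as [[]|[[]|[]]]; auto.
  - do 4 right; left. destruct H as [A [B [Hs [Hc Hp]]]]. exists A, B; repeat split; auto.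
    destruct Hp as [[]|[[]|[]]]; auto.
  - do 5 right; left. destruct H as [v [A [Hs [Hc [[y Hy] Hall]]]]].
    exists v, A; repeat split; auto. exists y; auto.
    intros y'; destruct (Hall y'); auto.
  - do 6 right. destruct H as [v [A [Hs [Hc [[y Hy] Hall]]]]].
    exists v, A; repeat split; auto. exists y; auto.
    intros y'; destruct (Hall y'); auto.
Qed.

Lemma Gamma_mono M N : sub M N -> sub (GammaTP M) (GammaTP N).
Proof.
  intros Hs. unfold sub; simpl; repeat split.
  - intros n [A [H1 [H2 H3]]]; exists A; eauto using sat_mono.
  - intros n [A [H1 [H2 H3]]]; exists A; eauto using sat_mono.
  - intros n [A [H1 [H2 H3]]]; exists A; eauto using Psat_mono.
  - intros n [[A [H1 [H2 H3]]]|H]; [left|right]; eauto.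
    exists A; eauto using sat_mono.
Qed.

Lemma stage_cases {I : Type} (lt : I -> I -> Prop) i :
  (forall j, ~ lt j i) \/ (exists j, lt j i /\ forall k, ~ (lt j k /\ lt k i)) \/
  ((exists j, lt j i) /\ forall j, lt j i -> exists k, lt j k /\ lt k i).
Proof.
  destruct (classic (exists j, lt j i)) as [Hj|Hj].
  - destruct (classic (exists j, lt j i /\ forall k, ~ (lt j k /\ lt k i))) as [Hk|Hk]; auto.
    right; right; split; auto. intros j Hji.
    apply NNPP; intros Hn. apply Hk. exists j; split; auto.
    intros k Hk'. apply Hn; eauto.
  - left; intros j Hji; apply Hj; eauto.
Qed.

Lemma seq_mono {I : Type} (lt : I -> I -> Prop) (S : I -> model) :
  well_order lt -> star_sequence lt S ->
  forall a, (forall b, lt b a -> sub (S b) (S a)) /\ sub (S a) (GammaTP (S a)).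
Proof.
  intros [Hwf [Htr Htot]] Hseq. apply (well_founded_ind Hwf). intros a IH.
  destruct (Hseq a) as [H0 [H1 H2]].
  destruct (stage_cases lt a) as [C|[[g [Hg Hgi]]|[Hne Hlim]]].
  - split. intros b Hb; exfalso; eapply C; eauto.
    apply sub_trans with stage0. apply (proj1 (meq_sub _ _ (H0 C))).
    unfold sub; simpl; repeat split; try tauto.
  - destruct (meq_sub _ _ (H1 g Hg Hgi)) as [Ha Ha'].
    assert (P1 : forall b, lt b a -> sub (S b) (S a)).
    { intros b Hb. apply sub_trans with (GammaTP (S g)); auto.
      destruct (Htot b g) as [Hbg|[<-|Hgb]].
      - apply sub_trans with (S g). apply (IH g Hg); auto. apply (IH g Hg).
      - apply (IH b Hg).
      - exfalso; apply (Hgi b); auto. }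
    split; auto. apply sub_trans with (GammaTP (S g)); auto.
    apply Gamma_mono; auto.
  - destruct (meq_sub _ _ (H2 Hne Hlim)) as [Ha Ha'].
    assert (P1 : forall b, lt b a -> sub (S b) (S a)).
    { intros b Hb. apply sub_trans with (union_below lt S a); auto.
      unfold sub; simpl; repeat split; intros n Hn; exists b; auto. }
    split; auto. apply sub_trans with (union_below lt S a); auto.
    unfold sub; simpl; repeat split; intros n [j [Hj Hn]];
      apply (Gamma_mono _ _ (P1 j Hj)); apply (IH j Hj); auto.
Qed.

Lemma seq_below {I : Type} (lt : I -> I -> Prop) (S : I -> model) :
  well_order lt -> star_sequence lt S ->
  forall a n, (Tp (S a) n -> exists b, lt b a /\ Tp (GammaTP (S b)) n) /\
              (Tm (S a) n -> exists b, lt b a /\ Tm (GammaTP (S b)) n) /\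
              (Pp (S a) n -> exists b, lt b a /\ Pp (GammaTP (S b)) n).
Proof.
  intros [Hwf [Htr Htot]] Hseq a. induction a as [a IH] using (well_founded_ind Hwf). intros n.
  destruct (Hseq a) as [H0 [H1 H2]].
  destruct (stage_cases lt a) as [C|[[g [Hg Hgi]]|[Hne Hlim]]].
  - destruct (H0 C) as [E1 [E2 [E3 E4]]].
    repeat split; intros H; [apply E1 in H|apply E2 in H|apply E3 in H]; simpl in H; tauto.
  - destruct (H1 g Hg Hgi) as [E1 [E2 [E3 E4]]].
    repeat split; intros H; exists g; split; auto;
      [apply E1 in H|apply E2 in H|apply E3 in H]; auto.
  - destruct (H2 Hne Hlim) as [E1 [E2 [E3 E4]]].
    repeat split; intros H; [apply E1 in H|apply E2 in H|apply E3 in H]; simpl in H;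
      destruct H as [j [Hj H]]; destruct (IH j Hj n) as [K1 [K2 K3]];
      [destruct (K1 H) as [b [Hb Hb']]|destruct (K2 H) as [b [Hb Hb']]|destruct (K3 H) as [b [Hb Hb']]];
      exists b; split; eauto.
Qed.
Lemma neg_involutive A : neg (neg A) = A.
Proof. induction A; simpl; f_equal; auto. Qed.

Lemma subst_neg v u A : subst v u (neg A) = neg (subst v u A).
Proof.
  induction A; simpl; try rewrite IHA1, IHA2; auto.
  all: destruct (Nat.eqb v0 v); simpl; rewrite ?IHA; auto.
Qed.

Lemma fvt_subst_closed v u : fvt u = [] -> forall t x, In x (fvt (subst_t v u t)) -> In x (fvt t) /\ x <> v.
Proof.
  intros Hu; induction t; simpl; intros x Hx.
  - destruct (Nat.eqb_spec n v). rewrite Hu in Hx; destruct Hx.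
    simpl in Hx. destruct Hx as [<-|[]]; auto.
  - destruct Hx.
  - auto.
  - apply in_app_or in Hx; destruct Hx as [Hx|Hx];
      [destruct (IHt1 x Hx)|destruct (IHt2 x Hx)]; split; auto using in_or_app.
  - apply in_app_or in Hx; destruct Hx as [Hx|Hx];
      [destruct (IHt1 x Hx)|destruct (IHt2 x Hx)]; split; auto using in_or_app.
Qed.

Lemma fv_subst_closed v u : fvt u = [] -> forall A x, In x (fv (subst v u A)) -> In x (fv A) /\ x <> v.
Proof.
  intros Hu; induction A; simpl; intros x Hx;
    try (apply (fvt_subst_closed v u Hu); auto; fail);
    try (apply in_app_or in Hx; destruct Hx as [Hx|Hx];
      [destruct (fvt_subst_closed v u Hu _ _ Hx)|destruct (fvt_subst_closed v u Hu _ _ Hx)];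
      split; auto using in_or_app; fail);
    try (apply in_app_or in Hx; destruct Hx as [Hx|Hx];
      [destruct (IHA1 x Hx)|destruct (IHA2 x Hx)]; split; auto using in_or_app; fail).
  - destruct (Nat.eqb_spec v0 v); simpl in Hx.
    + subst. split; auto. apply in_remove in Hx. tauto.
    + apply in_remove in Hx. destruct Hx as [Hx Hne]. destruct (IHA x Hx).
      split; auto. apply in_in_remove; auto.
  - destruct (Nat.eqb_spec v0 v); simpl in Hx.
    + subst. split; auto. apply in_remove in Hx. tauto.
    + apply in_remove in Hx. destruct Hx as [Hx Hne]. destruct (IHA x Hx).
      split; auto. apply in_in_remove; auto.
Qed.

Lemma sentence_subst v B y : remove Nat.eq_dec v (fv B) = [] -> sentence (subst v (num y) B).
Proof.
  intros H. unfold sentence. destruct (fv (subst v (num y) B)) as [|x l] eqn:E; auto.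
  exfalso. assert (Hx : In x (fv (subst v (num y) B))) by (rewrite E; left; auto).
  apply fv_subst_closed in Hx; [|apply fvt_num]. destruct Hx as [Hx Hne].
  assert (In x (remove Nat.eq_dec v (fv B))) by (apply in_in_remove; auto).
  rewrite H in H0; destruct H0.
Qed.

Lemma sat_or_inv M A B : sat M (Or A B) -> sat M A \/ sat M B.
Proof. intros H; inversion H; auto. Qed.
Lemma sat_and_inv M A B : sat M (And A B) -> sat M A /\ sat M B.
Proof. intros H; inversion H; auto. Qed.
Lemma sat_tr_inv M t : sat M (Tr t) -> Tp M (valt t).
Proof. intros H; inversion H; auto. Qed.
Lemma sat_ntr_inv M t : sat M (NTr t) -> Tm M (valt t).
Proof. intros H; inversion H; auto. Qed.
Lemma sat_all_inv M v A : sat M (All v A) -> forall n, sat M (subst v (num n) A).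
Proof. intros H; inversion H; auto. Qed.
Lemma sat_ex_inv M v A : sat M (Ex v A) -> exists n, sat M (subst v (num n) A).
Proof. intros H; inversion H; eauto. Qed.

Definition Mx : model := Model (fun _ => False) (fun _ => True) (fun _ => False) (fun _ => False).
Lemma Mx_cons : consistent Mx.
Proof. split; simpl; tauto. Qed.

Lemma not_bp_P q : ~ base_paradoxical (Pa q) /\ ~ base_paradoxical (NPa q).
Proof.
  split; intros [Hs [[H1 H2] _]]; simpl in H2;
    destruct (soundness Mx Mx_cons _ _ H2 e0) as [B [[<-|[]] HB]];
    try (intros C [<-|[]]; simpl; exact I); simpl in HB; exact HB.
Qed.

Theorem mainTheorem14 :
  forall (I : Type) (lt : I -> I -> Prop) (S : I -> model),
    well_order lt -> star_sequence lt S ->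
    forall alpha : I, consistent (S alpha) -> sound_star (S alpha).
Proof.
  intros I lt S Hwo Hseq alpha. pose proof Hwo as [Hwf [Htr Htot]].
  induction alpha as [a IHa] using (well_founded_ind Hwf).
  intros Hcons.
  pose proof (seq_mono lt S Hwo Hseq) as Hmono.
  pose proof (seq_below lt S Hwo Hseq) as Hbelow.
  assert (Hcb : forall b, lt b a -> consistent (S b)).
  { intros b Hb. destruct (Hmono a) as [Hm _]. destruct (Hm b Hb) as [S1 [S2 [S3 S4]]].
    destruct Hcons as [C1 C2]. split; intros n [X Y]; [apply (C1 n)|apply (C2 n)]; auto. }
  assert (Hsb : forall b, lt b a -> sound_star (S b)) by (intros b Hb; apply IHa; auto).
  assert (HPsat : forall n, Pp (S a) n -> Psat (S a) n).
  { intros n Hn. destruct (Hbelow a n) as [_ [_ K]]. destruct (K Hn) as [b [Hb [A [_ [Hc HP]]]]].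
    subst n. eapply Psat_mono; [|exact HP]. apply (proj1 (Hmono a)); auto. }
  assert (HT : forall B, Tp (S a) (code B) -> sat (S a) B).
  { intros B Hn. destruct (Hbelow a (code B)) as [K _]. destruct (K Hn) as [b [Hb [A [_ [Hc HP]]]]].
    apply code_inj in Hc; subst. eapply sat_mono; [|exact HP]. apply (proj1 (Hmono a)); auto. }
  assert (HF : forall B, Tm (S a) (code B) -> sat (S a) (neg B)).
  { intros B Hn. destruct (Hbelow a (code B)) as [_ [K _]]. destruct (K Hn) as [b [Hb [A [_ [Hc HP]]]]].
    apply code_inj in Hc; subst. eapply sat_mono; [|exact HP]. apply (proj1 (Hmono a)); auto. }
  assert (Hfin : forall d C, lt d a -> sentence C -> Psat (S d) (code C) ->
            sat (S d) C \/ sat (S d) (neg C) -> False).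
  { intros d C Hd HC HP Hs. apply (Hsb d Hd C HC); auto.
    right. destruct Hs; [apply sat_orl|apply sat_orr]; auto. }
  assert (HK : forall n, Pp (S a) n -> Tp (S a) n \/ Tm (S a) n -> False).
  { intros n Hp Ht. destruct (Hbelow a n) as [K1 [K2 K3]].
    destruct (K3 Hp) as [b [Hb [A1 [_ [Hc1 HP]]]]].
    assert (Hq : exists c, lt c a /\ exists C, sentence C /\ code C = n /\
                 (sat (S c) C \/ sat (S c) (neg C))).
    { destruct Ht as [Ht|Ht]; [destruct (K1 Ht) as [c [Hc [C [HC1 [HC2 HC3]]]]]
                              |destruct (K2 Ht) as [c [Hc [C [HC1 [HC2 HC3]]]]]];
      exists c; split; auto; exists C; auto. }
    destruct Hq as [c [Hc [C [HC1 [HC2 HC3]]]]]. subst n.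
    apply code_inj in HC2; subst A1.
    destruct (Htot b c) as [Hbc|[<-|Hcb']].
    - apply (Hfin c C Hc HC1); auto. eapply Psat_mono; [|exact HP]. apply (proj1 (Hmono c)); auto.
    - apply (Hfin b C Hb HC1); auto.
    - apply (Hfin b C Hb HC1); auto.
      assert (Hsub : sub (S c) (S b)) by (apply (proj1 (Hmono b)); auto).
      destruct HC3; [left|right]; eapply sat_mono; eauto. }
  assert (Hsc : forall X, sat (S a) X -> sat (S a) (neg X) -> False).
  { intros X H1 H2. apply satv_sat' in H1. apply satv_sat' in H2.
    exact (satv_neg_cons _ Hcons X e0 H1 H2). }
  assert (Hbp : forall C, base_paradoxical C -> ~ sat (S a) C /\ ~ sat (S a) (neg C)).
  { intros C [HsC [[H1 H2] [H3 H4]]].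
    assert (N1 : ~ sat (S a) C).
    { intros Hs. apply satv_sat' in Hs.
      destruct (soundness _ Hcons _ _ H1 e0) as [B [[<-|[]] HB]].
      { intros X [<-|[]]; auto. }
      simpl in HB. unfold quote in HB. rewrite evalt_num in HB.
      assert (HB2 := HF _ HB). apply satv_sat' in HB2.
      destruct (soundness _ Hcons _ _ H3 e0) as [B [[<-|[]] HB']].
      { intros X [<-|[]]; auto. }
      simpl in HB'. unfold quote in HB'. rewrite evalt_num in HB'.
      apply (proj1 Hcons (code C)); split; auto. }
    split; auto. intros Hs. apply satv_sat' in Hs.
    destruct (soundness _ Hcons _ _ H3 e0) as [B [[<-|[]] HB']].
    { intros X [<-|[]]; auto. }
    simpl in HB'. unfold quote in HB'. rewrite evalt_num in HB'. apply HT in HB'. auto. }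
  intros A HsA Hhyp HPs.
  destruct Hhyp as [HP0|Hs].
  - destruct HP0 as [B HB]. apply code_inj in HB. subst A.
    destruct (not_bp_P (quote B)) as [NB1 NB2].
    destruct HPs as [H|[H|[H|[H|[H|[H|H]]]]]].
    + destruct H as [A' [_ [Hc [[C [HC HcC]]|[C [HC HcC]]]]]]; apply code_inj in Hc; subst A';
        apply code_inj in HcC; subst C; simpl in HC; auto.
    + destruct H as [t [_ [Hc _]]]; apply code_inj in Hc; discriminate.
    + destruct H as [t [_ [Hc _]]]; apply code_inj in Hc; discriminate.
    + destruct H as [t [u [_ [Hc _]]]]; apply code_inj in Hc; discriminate.
    + destruct H as [t [u [_ [Hc _]]]]; apply code_inj in Hc; discriminate.
    + destruct H as [t [u [_ [Hc _]]]]; apply code_inj in Hc; discriminate.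
    + destruct H as [t [u [_ [Hc _]]]]; apply code_inj in Hc; discriminate.
  - assert (Inner : forall k A, fsize A <= k -> sentence A -> sat (S a) (Or A (neg A)) ->
                    ~ Psat (S a) (code A)).
    2:{ exact (Inner (fsize A) A (le_n _) HsA Hs HPs). }
    clear A HsA Hs HPs.
    induction k; intros A Hk HsA Hs HPs; [destruct A; simpl in Hk; lia|].
    assert (LS : forall X, fsize X <= k -> sentence X -> sat (S a) X \/ sat (S a) (neg X) ->
                 Pp (S a) (code X) -> False).
    { intros X HX HsX HsX' HpX. apply (IHk X HX HsX); auto.
      destruct HsX'; [apply sat_orl|apply sat_orr]; auto. }
    destruct HPs as [H|[H|[H|[H|[H|[H|H]]]]]].
    + destruct H as [A' [_ [Hc [[C [HC HcC]]|[C [HC HcC]]]]]]; apply code_inj in Hc; subst A';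
        apply code_inj in HcC; subst C; destruct (Hbp _ HC) as [N1 N2];
        destruct (sat_or_inv _ _ _ Hs); auto.
      rewrite neg_involutive in N2; auto.
    + destruct H as [t [_ [Hc HP]]]; apply code_inj in Hc; subst A.
      apply (HK _ HP). destruct (sat_or_inv _ _ _ Hs) as [Ho|Ho]; simpl in Ho;
        [left; apply sat_tr_inv| right; apply sat_ntr_inv]; exact Ho.
    + destruct H as [t [_ [Hc HP]]]; apply code_inj in Hc; subst A.
      apply (HK _ HP). destruct (sat_or_inv _ _ _ Hs) as [Ho|Ho]; simpl in Ho;
        [right; apply sat_ntr_inv| left; apply sat_tr_inv]; exact Ho.
    + destruct H as [B [C [HsBC [Hc HP]]]]; apply code_inj in Hc; subst A.
      unfold sentence in HsBC; simpl in HsBC. apply app_eq_nil in HsBC. destruct HsBC as [HsB HsC].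
      simpl in Hk.
      assert (LB := LS B ltac:(lia) HsB). assert (LC := LS C ltac:(lia) HsC).
      pose proof (HPsat (code B)) as Q1; pose proof (HPsat (code C)) as Q2.
      pose proof (HT B) as Q3; pose proof (HT C) as Q4; pose proof (Hsc B) as Q5; pose proof (Hsc C) as Q6.
      destruct (sat_or_inv _ _ _ Hs) as [Ho|Ho]; simpl in Ho;
        [apply sat_and_inv in Ho | apply sat_or_inv in Ho]; tauto.
    + destruct H as [B [C [HsBC [Hc HP]]]]; apply code_inj in Hc; subst A.
      unfold sentence in HsBC; simpl in HsBC. apply app_eq_nil in HsBC. destruct HsBC as [HsB HsC].
      simpl in Hk.
      assert (LB := LS B ltac:(lia) HsB). assert (LC := LS C ltac:(lia) HsC).
      pose proof (HF B) as Q1; pose proof (HF C) as Q2; pose proof (Hsc B) as Q3; pose proof (Hsc C) as Q4.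
      destruct (sat_or_inv _ _ _ Hs) as [Ho|Ho]; simpl in Ho;
        [apply sat_or_inv in Ho | apply sat_and_inv in Ho]; tauto.
    + destruct H as [v [B [HsB [Hc [[y Hy] Hall]]]]]; apply code_inj in Hc; subst A.
      unfold sentence in HsB; simpl in HsB. simpl in Hk.
      assert (LB : forall n, sat (S a) (subst v (num n) B) \/ sat (S a) (neg (subst v (num n) B)) ->
                   Pp (S a) (code (subst v (num n) B)) -> False).
      { intros n. apply LS. rewrite fsize_subst; lia. apply sentence_subst; auto. }
      destruct (sat_or_inv _ _ _ Hs) as [Ho|Ho]; simpl in Ho.
      * apply (LB y); auto. left; apply sat_all_inv; auto.
      * apply sat_ex_inv in Ho. destruct Ho as [n Ho]. rewrite subst_neg in Ho.
        destruct (Hall n) as [H'|H'].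
        -- apply (LB n); auto.
        -- apply HT in H'. eauto.
    + destruct H as [v [B [HsB [Hc [[y Hy] Hall]]]]]; apply code_inj in Hc; subst A.
      unfold sentence in HsB; simpl in HsB. simpl in Hk.
      assert (LB : forall n, sat (S a) (subst v (num n) B) \/ sat (S a) (neg (subst v (num n) B)) ->
                   Pp (S a) (code (subst v (num n) B)) -> False).
      { intros n. apply LS. rewrite fsize_subst; lia. apply sentence_subst; auto. }
      destruct (sat_or_inv _ _ _ Hs) as [Ho|Ho]; simpl in Ho.
      * apply sat_ex_inv in Ho. destruct Ho as [n Ho].
        destruct (Hall n) as [H'|H'].
        -- apply (LB n); auto.
        -- apply HF in H'. eauto.
      * apply (LB y); auto. right. rewrite <- subst_neg. apply sat_all_inv; auto.
Qed.
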